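(* $D(19,\{3,4\})\le 35$; equivalently, there exists a $\{K_3,K_4\}$-decomposition of $K_{19}$ with $\alpha\le 13$ (indeed one with $13$ copies of $K_3$ and $22$ copies of $K_4$).
   Context: A $\{K_3,K_4\}$-decomposition of $K_v$ is a collection of subgraphs, each isomorphic to $K_3$ or $K_4$, such that every edge of $K_v$ lies in exactly one of them. $\alpha$ and $\beta$ denote the numbers of copies of $K_3$ and $K_4$ in the decomposition (so $3\alpha+6\beta=\binom{v}{2}$). $D(v,\{3,4\})$ is the minimum of $\alpha+\beta$ over all such decompositions of $K_v$. *)

(* Defs.v *)
From mathcomp Require Import all_boot.
Set Implicit Arguments. Unset Strict Implicit. Unset Printing Implicit Defensive.

(* A copy of K_3 or K_4 in K_v is determined by its
   vertex set b (|b| = 3 or 4); its edges are all pairs of distinct vertices of b. *)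
Definition is_K34_decomp (v : nat) (B : seq {set 'I_v}) : bool :=
  all (fun b : {set 'I_v} => (#|b| == 3) || (#|b| == 4)) B &&
  [forall x : 'I_v, forall y : 'I_v,
     (x != y) ==> (count (fun b : {set 'I_v} => (x \in b) && (y \in b)) B == 1)].

Definition alphaK3 (v : nat) (B : seq {set 'I_v}) : nat :=
  count (fun b : {set 'I_v} => #|b| == 3) B.
Definition betaK4 (v : nat) (B : seq {set 'I_v}) : nat :=
  count (fun b : {set 'I_v} => #|b| == 4) B.

(* Main.v *)
Require Import Defs.
From mathcomp Require Import all_boot.

Definition blk (s : seq nat) : {set 'I_19} := [set i : 'I_19 | nat_of_ord i \in s].

Definition L : seq (seq nat) := [:: [:: 1; 7; 12; 18]; [:: 2; 8; 13; 18]; [:: 0; 6; 14; 18]; [:: 4; 16; 18]; [:: 5; 17; 18]; [:: 3; 15; 18]; [:: 9; 10; 11; 18]; [:: 1; 2; 9]; [:: 0; 2; 10]; [:: 0; 1; 11]; [:: 1; 4; 8; 17]; [:: 2; 5; 6; 15]; [:: 0; 3; 7; 16]; [:: 1; 3; 6; 13]; [:: 2; 4; 7; 14]; [:: 0; 5; 8; 12]; [:: 1; 10; 15]; [:: 2; 11; 16]; [:: 0; 9; 17]; [:: 1; 5; 14; 16]; [:: 2; 3; 12; 17]; [:: 0; 4; 13; 15]; [:: 4; 5; 10]; [:: 3; 5; 11]; [:: 3; 4; 9]; [:: 4; 6; 11; 12]; [:: 5; 7; 9; 13]; [:: 3; 8; 10; 14]; [:: 7; 8; 11; 15]; [:: 6;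 8; 9; 16]; [:: 6; 7; 10; 17]; [:: 10; 12; 13; 16]; [:: 11; 13; 14; 17]; [:: 9; 12; 14; 15]; [:: 15; 16; 17]].

Arguments L : simpl never.

Lemma card_blk s : #|blk s| = count (fun i => i \in s) (iota 0 19).
Proof.
rewrite -val_enum_ord count_map cardE /enum_mem size_filter -enumT (@eq_filter _ _ predT) // filter_predT; apply: eq_count => i /=; by rewrite in_set.
Qed.

Lemma nat_check :
  all (fun a => all (fun b => (a != b) ==>
     (count (fun s => (a \in s) && (b \in s)) L == 1)) (iota 0 19)) (iota 0 19).
Proof. vm_compute. reflexivity. Qed.

Lemma size_check :
  all (fun s => (count (fun i => i \in s) (iota 0 19) == 3) ||
                (count (fun i => i \in s) (iota 0 19) == 4)) L.
Proof. vm_compute. reflexivity. Qed.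

Lemma ab_check :
  count (fun s => count (fun i => i \in s) (iota 0 19) == 3) L +
  count (fun s => count (fun i => i \in s) (iota 0 19) == 4) L <= 35.
Proof. vm_compute. reflexivity. Qed.

Theorem mainTheorem18 :
  exists B : seq {set 'I_19},
    is_K34_decomp B /\ alphaK3 B + betaK4 B <= 35.
Proof.
exists (map blk L); split.
  apply/andP; split.
    rewrite all_map; apply: sub_all size_check => s /=; by rewrite card_blk.
  apply/forallP => x; apply/forallP => y; apply/implyP => nxy.
  rewrite count_map.
  have hx : nat_of_ord x \in iota 0 19 by rewrite mem_iota /=.
  have hy : nat_of_ord y \in iota 0 19 by rewrite mem_iota /=.
  have := allP nat_check (nat_of_ord x) hx.
  move/allP/(_ (nat_of_ord y) hy).
  move/implyP/(_ nxy) => H.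
  rewrite (@eq_count _ _ (fun s => (nat_of_ord x \in s) && (nat_of_ord y \in s))) //.
  move=> s; by rewrite /preim /= /blk !in_set.
rewrite /alphaK3 /betaK4 !count_map.
have E : forall k, count (preim blk (fun b : {set 'I_19} => #|b| == k)) L =
   count (fun s => count (fun i => i \in s) (iota 0 19) == k) L.
  by move=> k; apply: eq_count => s /=; rewrite card_blk.
by rewrite !E ab_check.
Qed.
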